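(* Let $\xi$ be an American option and $(y,\chi)\in\Phi^{\mathrm{bg}}(\xi)$. Then for all $t=0,\ldots,T$, \[ y_t\in\chi^\ast_t\mathcal{Z}^{\mathrm{bd}}_t\ \text{ on }\{\chi^\ast_t>0\},\qquad y_t\in\mathcal{Q}_t\ \text{ on }\{\chi^\ast_t=0\}, \] that is, for each $\mu\in\Omega_t$: if $\chi^\ast_t(\mu)>0$ then $y_t(\mu)\in\chi^\ast_t(\mu)\mathcal{Z}^{\mathrm{bd}\mu}_t$, and if $\chi^\ast_t(\mu)=0$ then $y_t(\mu)\in\mathcal{Q}^\mu_t$.
   Context: Finite filtered probability space $(\Omega,\mathcal{F},\mathbb{P};(\mathcal{F}_t)_{t=0}^T)$, $\mathcal{F}_0$ trivial, $\mathcal{F}_T=2^\Omega$, $\mathbb{P}(\{\omega\})>0$. $\Omega_t$: atoms (nodes) of $\mathcal{F}_t$; $\mathrm{succ}\,\mu=\{\nu\in\Omega_{t+1}:\nu\subseteq\mu\}$. $\mathcal{L}_t$: $\mathcal{F}_t$-measurable $\mathbb{R}^d$-valued random variables (functions on $\Omega_t$). $d$ assets, $\mathcal{F}_t$-measurable exchange rates $\pi^{jk}_t>0$, $\pi^{jj}_t=1$. $\mathcal{K}^\mu_t$: convex cone generated by $e^1,\ldots,e^d$ and $\pi^{jk}_t(\mu)e^j-e^k$; $\mathcal{K}_t=\{x\in\mathcal{L}_t:x(\mu)\in\mathcal{K}^\mu_t\ \forall\mu\}$. Deferred solvency cone $\mathcal{Q}_t$: $z\in\mathcal{L}_t$ for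 which there exist $y_{t+1},\ldots,y_{T+1}$, $y_s\in\mathcal{L}_{s-1}$, $y_{T+1}=0$, with $z-y_{t+1}\in\mathcal{K}_t$, $y_s-y_{s+1}\in\mathcal{K}_s$ ($s>t$); $\mathcal{Q}^\mu_t=\{z(\mu):z\in\mathcal{Q}_t\}$. Trading strategies $\Phi$: $y=(y_t)_{t=0}^{T+1}$, $y_0\in\mathbb{R}^d$, $y_t\in\mathcal{L}_{t-1}$, $y_{T+1}=0$. Mixed stopping times $\mathcal{X}$: adapted $[0,1]$-valued $\chi$ with $\sum_{t=0}^T\chi_t=1$; $\chi^\ast_t=\sum_{s=t}^T\chi_s$. American option: adapted $\mathbb{R}^d$-valued $\xi$. $\Phi^{\mathrm{bg}}(\xi)$: pairs $(y,\chi)\in\Phi\times\mathcal{X}$ with $y_t+\chi_t\xi_t-y_{t+1}\in\mathcal{K}_t$ for each $t=0,\ldots,T$. Construction (nodewise): $\mathcal{U}^{\mathrm{bd}\mu}_t=-\xi_t(\mu)+\mathcal{Q}^\mu_t$; at $T$: $\mathcal{Z}^{\mathrm{bd}\mu}_T=\mathcal{V}^{\mathrm{bd}\mu}_T=\mathcal{W}^{\mathrm{bd}\mu}_T=\mathcal{U}^{\mathrm{bd}\mu}_T$; for $t<T$: $\mathcal{W}^{\mathrm{bd}\mu}_t=\bigcap_{\nu\in\mathrm{succ}\,\mu}\mathcal{Z}^{\mathrm{bd}\nu}_{t+1}$, $\mathcal{V}^{\mathrm{bd}\mu}_t=\mathcal{W}^{\mathrm{bd}\mu}_t+\mathcal{Q}^\mu_t$,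 $\mathcal{Z}^{\mathrm{bd}\mu}_t=\mathrm{conv}\{\mathcal{U}^{\mathrm{bd}\mu}_t,\mathcal{V}^{\mathrm{bd}\mu}_t\}$. Standing assumption: no arbitrage (no $y\in\Phi$ with $y_0=0$, $y_t-y_{t+1}\in\mathcal{K}_t$ for $t<T$ and $y_T-x\in\mathcal{K}_T$ for a nonzero componentwise non-negative $x\in\mathcal{L}_T$). *)

(* Defs.v *)
From mathcomp Require Import all_boot all_order all_algebra.
Set Implicit Arguments. Unset Strict Implicit. Unset Printing Implicit Defensive.
Import Order.TTheory GRing.Theory Num.Theory.
Local Open Scope ring_scope.

Section Market.
Variables (R : realFieldType) (d : nat) (Omega : finType) (T : nat).

(* The filtration is given by its atoms: [part t w] is the atom (node) of
   F_t containing w. *)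
Variable part : nat -> Omega -> {set Omega}.

Definition is_filtration : Prop :=
  [/\ forall t w, w \in part t w,
      forall t w w', w' \in part t w -> part t w' = part t w,
      forall t w, (t < T)%N -> part t.+1 w \subset part t w,
      forall w, part 0%N w = setT &
      forall w, part T w = [set w]].

Definition vec := 'rV[R]_d.

Definition measurable_at (A : Type) (t : nat) (x : Omega -> A) : Prop :=
  forall w w', w' \in part t w -> x w' = x w.

Definition evec (j : 'I_d) : vec := delta_mx 0 j.

Definition in_Kcone (p : 'I_d -> 'I_d -> R) (v : vec) : Prop :=
  exists (a : 'I_d -> R) (b : 'I_d -> 'I_d -> R),
    [/\ forall j, 0 <= a j, forall j k, 0 <= b j k &
        v = \sum_j a j *: evec j
            + \sum_j \sum_k b j k *: (p j k *: evec j - evec k)].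

Variable pi : nat -> Omega -> 'I_d -> 'I_d -> R.

Definition exchange_rates : Prop :=
  forall t, (t <= T)%N ->
    [/\ measurable_at t (pi t),
        forall w j k, 0 < pi t w j k &
        forall w j, pi t w j j = 1].

Definition in_K (t : nat) (x : Omega -> vec) : Prop :=
  forall w, in_Kcone (pi t w) (x w).

Definition in_Q (t : nat) (z : Omega -> vec) : Prop :=
  measurable_at t z /\
  exists ys : nat -> Omega -> vec,
    [/\ forall s, (t < s <= T.+1)%N -> measurable_at s.-1 (ys s),
        forall w, ys T.+1 w = 0,
        in_K t (fun w => z w - ys t.+1 w) &
        forall s, (t < s <= T)%N -> in_K s (fun w => ys s w - ys s.+1 w)].

(* Q^mu_t, with mu the atom of F_t containing w *)
Definition Qnode (t : nat) (w : Omega) (v : vec) : Prop :=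
  exists z, in_Q t z /\ z w = v.

Definition convex_set (C : vec -> Prop) : Prop :=
  forall x y (l : R), 0 <= l <= 1 -> C x -> C y -> C (l *: x + (1 - l) *: y).

Definition conv_hull (A : vec -> Prop) : vec -> Prop :=
  fun v => forall C, convex_set C -> (forall u, A u -> C u) -> C v.

Definition msum (A B : vec -> Prop) : vec -> Prop :=
  fun v => exists a b, [/\ A a, B b & v = a + b].

Variable xi : nat -> Omega -> vec.

Definition adapted_payoff : Prop :=
  forall t, (t <= T)%N -> measurable_at t (xi t).

Definition Ubd (t : nat) (w : Omega) : vec -> Prop :=
  fun v => exists q, Qnode t w q /\ v = - xi t w + q.

(* Backward recursion, k = T - t steps from the horizon. *)
Fixpoint Zrec (k : nat) : Omega -> vec -> Prop :=
  match k with
  | 0%N => Ubd T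
  | k'.+1 => fun w =>
      let t := (T - k'.+1)%N in
      (* W^{bd mu}_t: intersection over successors nu of mu of Z^{bd nu}_{t+1};
         successors of mu = part t w are the atoms part (t+1) w', w' in mu *)
      let W := fun v => forall w', w' \in part t w -> Zrec k' w' v in
      let V := msum W (Qnode t w) in
      conv_hull (fun v => Ubd t w v \/ V v)
  end.

Definition Zbd (t : nat) (w : Omega) : vec -> Prop := Zrec (T - t) w.

Definition is_strategy (y : nat -> Omega -> vec) : Prop :=
  [/\ forall w w', y 0%N w = y 0%N w',
      forall t, (1 <= t <= T)%N -> measurable_at t.-1 (y t) &
      forall w, y T.+1 w = 0].

Definition is_mixed_stop (chi : nat -> Omega -> R) : Prop :=
  [/\ forall t, (t <= T)%N -> measurable_at t (chi t),
      forall t w, (t <= T)%N -> 0 <= chi t w <= 1 &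
      forall w, \sum_(t < T.+1) chi t w = 1].

Definition chistar (chi : nat -> Omega -> R) (t : nat) (w : Omega) : R :=
  \sum_(t <= s < T.+1) chi s w.

Definition in_Phi_bg (y : nat -> Omega -> vec) (chi : nat -> Omega -> R) : Prop :=
  [/\ is_strategy y, is_mixed_stop chi &
      forall t, (t <= T)%N ->
        in_K t (fun w => y t w + chi t w *: xi t w - y t.+1 w)].

End Market.

Definition no_arbitrage (R : realFieldType) (d : nat) (Omega : finType) (T : nat)
  (part : nat -> Omega -> {set Omega}) (pi : nat -> Omega -> 'I_d -> 'I_d -> R) : Prop :=
  ~ exists (y : nat -> Omega -> 'rV[R]_d) (x : Omega -> 'rV[R]_d),
      [/\ is_strategy T part y,
          forall w, y 0%N w = 0,
          forall t, (t < T)%N -> in_K pi t (fun w => y t w - y t.+1 w),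
          in_K pi T (fun w => y T w - x w) &
          (forall w i, 0 <= x w 0 i) /\ (exists w, x w != 0)].

(* Main.v *)
Require Import Defs.
From mathcomp Require Import all_boot all_order all_algebra.
From mathcomp Require Import zify ring.
Import Order.TTheory GRing.Theory Num.Theory.
Local Open Scope ring_scope.

Section Proof.
Variables (R : realFieldType) (d : nat) (Omega : finType) (T : nat)
  (part : nat -> Omega -> {set Omega})
  (pi : nat -> Omega -> 'I_d -> 'I_d -> R)
  (xi : nat -> Omega -> 'rV[R]_d)
  (y : nat -> Omega -> 'rV[R]_d) (chi : nat -> Omega -> R).

Lemma inK0 (p : 'I_d -> 'I_d -> R) : in_Kcone p 0.
Proof.
exists (fun _ => 0), (fun _ _ => 0); split => //.
rewrite [X in X + _]big1 ?add0r; last by move=> j _; rewrite scale0r.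
rewrite big1 // => j _; rewrite big1 // => k _; by rewrite scale0r.
Qed.

Lemma inK_scale (p : 'I_d -> 'I_d -> R) (al : R) v :
  0 <= al -> in_Kcone p v -> in_Kcone p (al *: v).
Proof.
move=> Hal [a [b [Ha Hb ->]]].
exists (fun j => al * a j), (fun j k => al * b j k); split.
- by move=> j; rewrite mulr_ge0.
- by move=> j k; rewrite mulr_ge0.
rewrite scalerDr !scaler_sumr; congr (_ + _); apply: eq_bigr => j _.
  by rewrite scalerA.
by rewrite scaler_sumr; apply: eq_bigr => k _; rewrite scalerA.
Qed.

Hypothesis Hf : is_filtration T part.
Hypothesis Hex : exchange_rates T part pi.
Hypothesis Hxi : adapted_payoff T part xi.
Hypothesis Hphi : in_Phi_bg T part pi xi y chi.

Lemma part_mono s t w : (s <= t <= T)%N -> part t w \subset part s w.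
Proof.
case: Hf => Hin Heq Hsub H0 HT.
elim: t => [|t IH] /andP[Hst HtT].
  by have -> : s = 0%N by lia.
case E: (s == t.+1); first by move/eqP: E => ->.
apply: subset_trans (Hsub t w _) (IH _); lia.
Qed.

Arguments part_mono [s t] w.
Lemma meas_mono (A : Type) s t (x : Omega -> A) :
  measurable_at part s x -> (s <= t <= T)%N -> measurable_at part t x.
Proof.
move=> Hm Hst w w' Hw; apply: Hm.
by apply: (subsetP (part_mono w Hst)).
Qed.

Arguments meas_mono [A s t x].
Lemma memA t w w1 w2 : w2 \in part t w1 ->
  (w2 \in part t w) = (w1 \in part t w).
Proof.
case: Hf => Hin Heq Hsub H0 HT => H.
have E := Heq _ _ _ H.
apply/idP/idP => H'.
  by rewrite -(Heq _ _ _ H') E; apply: Hin.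
by rewrite (Heq _ _ _ H') in H.
Qed.

Arguments memA [t] w [w1 w2].
Lemma y_meas t : (t <= T)%N -> measurable_at part t (y t).
Proof.
case: Hphi => [[Hy0 Hym HyT] _ _] Ht.
case: t Ht => [|t] Ht; first by move=> w w' _; apply: Hy0.
apply: (meas_mono (Hym t.+1 _)); lia.
Qed.

Arguments y_meas [t].
Lemma y_end w : y T.+1 w = 0.
Proof. by case: Hphi => [[_ _ ->]]. Qed.

Lemma chi_meas t : (t <= T)%N -> measurable_at part t (chi t).
Proof. by case: Hphi => _ [Hc _ _] _ Ht; apply: Hc. Qed.

Arguments chi_meas [t].
Lemma chi_ge0 t w : (t <= T)%N -> 0 <= chi t w.
Proof. by case: Hphi => _ [_ Hc _] _ Ht; case/andP: (Hc t w Ht). Qed.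

Lemma chistar_split t w : (t <= T)%N -> chistar T chi t w = chi t w + chistar T chi t.+1 w.
Proof. by move=> Ht; rewrite /chistar big_ltn. Qed.

Lemma chistar_end w : chistar T chi T.+1 w = 0.
Proof. by rewrite /chistar big_geq. Qed.

Lemma chistar_ge0 t w : 0 <= chistar T chi t w.
Proof.
rewrite /chistar big_nat_cond; apply: sumr_ge0 => s /andP[/andP[_ Hs] _].
by apply: chi_ge0.
Qed.

Lemma chistar_zero t w s : chistar T chi t w = 0 -> (t <= s <= T)%N -> chi s w = 0.
Proof.
move=> H0 /andP[Hts HsT].
apply/eqP; rewrite eq_le chi_ge0 // andbT -H0 /chistar.
rewrite (big_cat_nat (n := s)) //=; last by lia.
rewrite (big_ltn (m := s)); last by lia.
rewrite addrCA lerDl.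
by apply: addr_ge0; rewrite big_nat_cond; apply: sumr_ge0 => i /andP[/andP[_ Hi] _];
  apply: chi_ge0; lia.
Qed.

Lemma chistar_meas t u : (u <= T)%N -> (t <= u.+1)%N -> measurable_at part u (chistar T chi t).
Proof.
move=> HuT Htu.
have E : forall w, chistar T chi t w = 1 - \sum_(0 <= s < t) chi s w.
  move=> w; case: Hphi => _ [_ _ Hs] _.
  rewrite -(Hs w) -(big_mkord xpredT (fun s => chi s w)).
  rewrite (big_cat_nat (n := t)) //=; last by lia.
  by rewrite addrC addrK.
move=> w w' Hw; rewrite !E; congr (_ - _); apply: eq_big_nat => s Hs.
have Hs' : (s <= u <= T)%N by lia.
have Hc : (s <= T)%N by lia.
exact: (meas_mono (chi_meas Hc) Hs' w w' Hw).
Qed.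

Arguments chistar_meas [t u].
Lemma Qnode_K t z w : measurable_at part t z -> in_K pi t z -> Qnode T part pi t w (z w).
Proof.
move=> Hm HK; exists z; split => //; split => //.
exists (fun _ _ => 0); split => //.
- by move=> w1; rewrite subr0; apply: HK.
- by move=> s _ w1; rewrite subr0; apply: inK0.
Qed.

Lemma Q_from_y t w (al : R) : (t <= T)%N ->
  (forall om, om \in part t w -> forall s, (t < s <= T)%N -> chi s om = 0) ->
  0 <= al -> Qnode T part pi t w (al *: (y t w + chi t w *: xi t w)).
Proof.
move=> HtT Hz Hal.
case: Hphi => _ _ HK.
pose z om := if om \in part t w then al *: (y t om + chi t om *: xi t om) else 0.
have Hw : w \in part t w by case: Hf.
exists z; split; last by rewrite /z Hw.
split.
  move=> w1 w2 H12; rewrite /z (memA w H12).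
  by rewrite (y_meas HtT _ _ H12) (chi_meas HtT _ _ H12) (Hxi _ HtT _ _ H12).
exists (fun s om => if om \in part t w then al *: y s om else 0); split.
- move=> s /andP[Hts HsT] w1 w2 H12.
  have H12' : w2 \in part t w1.
    apply: (subsetP (part_mono w1 (s := t) (t := s.-1) _)) => //; lia.
  rewrite (memA w H12').
  case E: (s == T.+1); first by move/eqP: E => ->; rewrite !y_end.
  case: Hphi => [[_ Hym _] _ _].
  by rewrite (Hym s _ _ _ H12) //; lia.
- by move=> w1; rewrite y_end scaler0; case: ifP.
- move=> w1; rewrite /z; case: ifP => _; last by rewrite subr0; apply: inK0.
  by rewrite -scalerBr; apply: inK_scale => //; apply: (HK t HtT).
- move=> s Hs w1; case: ifP => H1; last by rewrite subr0; apply: inK0.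
  rewrite -scalerBr; apply: inK_scale => //.
  have := HK s _ w1; rewrite (Hz w1 H1 s Hs) scale0r addr0; apply; lia.
Qed.

Lemma Zbd_T w v : Zbd T part pi xi T w v <-> Ubd T part pi xi T w v.
Proof. by rewrite /Zbd subnn. Qed.

Lemma Zbd_step t w v : (t < T)%N ->
  Zbd T part pi xi t w v <->
  conv_hull (fun v => Ubd T part pi xi t w v \/
     msum (fun v => forall w', w' \in part t w -> Zbd T part pi xi t.+1 w' v)
          (Qnode T part pi t w) v) v.
Proof.
move=> Ht; rewrite /Zbd.
case E: (T - t)%N => [|k]; first by lia.
have -> : k = (T - t.+1)%N by lia.
simpl.
have E2 : (T - (T - t.+1).+1)%N = t by lia.
by rewrite E2.
Qed.

Lemma conv_in (A : 'rV[R]_d -> Prop) v : A v -> conv_hull A v.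
Proof. by move=> Hv C _ HC; apply: HC. Qed.

Lemma conv_comb (A : 'rV[R]_d -> Prop) x x' l :
  0 <= l <= 1 -> A x -> A x' -> conv_hull A (l *: x + (1 - l) *: x').
Proof. by move=> Hl Hx Hx' C HC HAC; apply: HC => //; apply: HAC. Qed.

Lemma Zbd_U t w v : (t <= T)%N -> Ubd T part pi xi t w v -> Zbd T part pi xi t w v.
Proof.
move=> Ht Hv; case E: (t == T).
  by move/eqP: E => Et; rewrite Et in Hv *; apply/Zbd_T.
apply/Zbd_step; first lia.
by apply: conv_in; left.
Qed.

Lemma Ubd_neg t w : Ubd T part pi xi t w (- xi t w).
Proof.
exists 0; split; last by rewrite addr0.
have := @Qnode_K t (fun _ => 0) w; apply => //.
by move=> w1; apply: inK0.
Qed.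

Lemma second t w : (t <= T)%N -> chistar T chi t w = 0 -> Qnode T part pi t w (y t w).
Proof.
move=> Ht H0.
have Hz : forall om, om \in part t w -> forall s, (t <= s <= T)%N -> chi s om = 0.
  move=> om Hom s Hs; apply: (chistar_zero t om s) => //.
  by rewrite (chistar_meas Ht (leqnSn t) _ _ Hom).
have := @Q_from_y t w 1 Ht _ ler01.
have Hw : w \in part t w by case: Hf.
rewrite (Hz w Hw t) ?leqnn // scale0r addr0 scale1r; apply.
move=> om Hom s Hs; apply: Hz => //; lia.
Qed.

Lemma first_c0 t w : (t <= T)%N -> 0 < chistar T chi t w ->
  chistar T chi t.+1 w = 0 ->
  exists z, Zbd T part pi xi t w z /\ y t w = chistar T chi t w *: z.
Proof.
move=> Ht Hc Hc'.
have Ec : chistar T chi t w = chi t w by rewrite chistar_split // Hc' addr0.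
set c := chistar T chi t w in Hc Ec *.
exists (- xi t w + c^-1 *: (y t w + chi t w *: xi t w)); split.
  apply: Zbd_U => //; eexists; split; last reflexivity.
  apply: Q_from_y => //; last by rewrite invr_ge0 ltW.
  move=> om Hom s Hs; apply: (chistar_zero t.+1 om s) => //.
  by rewrite (chistar_meas Ht (leqnn _) _ _ Hom).
rewrite scalerDr scalerA mulfV ?gt_eqF // scale1r -Ec scalerN.
by rewrite addrC addrK.
Qed.

Lemma first_cpos t w : (t < T)%N ->
  (forall w, 0 < chistar T chi t.+1 w ->
       exists z, Zbd T part pi xi t.+1 w z /\ y t.+1 w = chistar T chi t.+1 w *: z) ->
  0 < chistar T chi t w -> 0 < chistar T chi t.+1 w ->
  exists z, Zbd T part pi xi t w z /\ y t w = chistar T chi t w *: z.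
Proof.
move=> Ht IH Hc Hc'.
have HtT : (t <= T)%N by lia.
have Ec : chistar T chi t w = chi t w + chistar T chi t.+1 w by rewrite chistar_split.
set c := chistar T chi t w in Hc Ec *.
set c' := chistar T chi t.+1 w in Hc' Ec *.
set ch := chi t w in Ec *.
have Hch : 0 <= ch by apply: chi_ge0.
case: Hphi => [[_ Hym _] _ HK].
have Hy1 : measurable_at part t (y t.+1) by apply: (Hym t.+1); lia.
set Y := y t.+1 w.
set k := y t w + ch *: xi t w - Y.
exists ((ch / c) *: (- xi t w) + (1 - ch / c) *: (c'^-1 *: Y + c'^-1 *: k)); split.
  apply/Zbd_step => //; apply: conv_comb.
  - rewrite divr_ge0 ?(ltW Hc) //= ler_pdivrMr // mul1r Ec lerDl; exact: ltW.
  - by left; apply: Ubd_neg.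
  right; exists (c'^-1 *: Y), (c'^-1 *: k); split => //.
    move=> w' Hw'.
    have Ec' : chistar T chi t.+1 w' = c' by apply: (chistar_meas HtT (leqnn _)).
    have [z' [Hz' Ey]] := IH w' ltac:(by rewrite Ec').
    rewrite /Y -(Hy1 _ _ Hw') Ey Ec' scalerA mulVf ?gt_eqF // scale1r //.
  pose zz om := c'^-1 *: (y t om + chi t om *: xi t om - y t.+1 om).
  have -> : c'^-1 *: k = zz w by [].
  apply: Qnode_K.
    move=> w1 w2 H12; rewrite /zz (y_meas HtT _ _ H12) (chi_meas HtT _ _ H12) (Hxi _ HtT _ _ H12).
    by rewrite (Hy1 _ _ H12).
  move=> w1; apply: inK_scale; first by rewrite invr_ge0 ltW.
  exact: (HK t HtT).
have E1 : c * (ch / c) = ch by field; rewrite gt_eqF.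
have E2 : c * (1 - ch / c) = c' by rewrite Ec; field; rewrite -Ec gt_eqF.
rewrite scalerDr !scalerA E1 E2 -scalerDr scalerA mulfV ?gt_eqF // scale1r.
by rewrite /k [Y + _]addrC subrK scalerN addrC addrK.
Qed.

Lemma main_step t : (t <= T)%N ->
  ((t < T)%N -> forall w, 0 < chistar T chi t.+1 w ->
       exists z, Zbd T part pi xi t.+1 w z /\ y t.+1 w = chistar T chi t.+1 w *: z) ->
  forall w,
    (0 < chistar T chi t w ->
       exists z, Zbd T part pi xi t w z /\ y t w = chistar T chi t w *: z) /\
    (chistar T chi t w = 0 -> Qnode T part pi t w (y t w)).
Proof.
move=> Ht IH w; split; last exact: second.
move=> Hc.
have := chistar_ge0 t.+1 w; rewrite le_eqVlt => /orP[/eqP H|H].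
  by apply: first_c0.
case E: (t == T).
  by move/eqP: E H => ->; rewrite chistar_end ltxx.
apply: first_cpos => //; first lia.
apply: IH; lia.
Qed.

End Proof.


Theorem propositionA4 (R : realFieldType) (d : nat) (Omega : finType) (T : nat)
  (part : nat -> Omega -> {set Omega})
  (pi : nat -> Omega -> 'I_d -> 'I_d -> R)
  (xi : nat -> Omega -> 'rV[R]_d)
  (y : nat -> Omega -> 'rV[R]_d) (chi : nat -> Omega -> R) :
  is_filtration T part ->
  exchange_rates T part pi ->
  no_arbitrage T part pi ->
  adapted_payoff T part xi ->
  in_Phi_bg T part pi xi y chi ->
  forall t, (t <= T)%N -> forall w,
    (0 < chistar T chi t w ->
       exists z, Zbd T part pi xi t w z /\ y t w = chistar T chi t w *: z) /\
    (chistar T chi t w = 0 -> Qnode T part pi t w (y t w)).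
Proof.
move=> Hf Hex _ Hxi Hphi.
suff H : forall k, (k <= T)%N -> forall w,
    (0 < chistar T chi (T - k)%N w ->
       exists z, Zbd T part pi xi (T - k)%N w z /\ y (T - k)%N w = chistar T chi (T - k)%N w *: z) /\
    (chistar T chi (T - k)%N w = 0 -> Qnode T part pi (T - k)%N w (y (T - k)%N w)).
  move=> t Ht; have := H (T - t)%N (leq_subr _ _).
  by rewrite subKn.
elim=> [|k IH] Hk.
  apply: (main_step _ _ _ _ _ _ _ _ _ Hf Hxi Hphi); first lia.
  by rewrite subn0 ltnn.
apply: (main_step _ _ _ _ _ _ _ _ _ Hf Hxi Hphi); first lia.
move=> _ w; have -> : (T - k.+1).+1 = (T - k)%N by lia.
by move=> Hc; apply: (IH _ w).1 => //; lia.
Qed.
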